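(* Let $\mathbb A$ be an abelian category. Let $a:A_1\to A_0$, $b:B_1\to B_0$ and $b':B'_1\to B'_0$ be objects of $\mathbb A^{[1]}$ and let $(u_0,u_1):b\to b'$ be a morphism in $\mathbb A^{[1]}$ such that the induced morphisms $\mathrm{Ker}(b)\to\mathrm{Ker}(b')$ and $\mathrm{Coker}(b)\to\mathrm{Coker}(b')$ are isomorphisms. If $A_0$ is a projective object of $\mathbb A$, then the functor of groupoids $(u_0,u_1)\circ-:\mathbf{Hom}_{\mathbb A^{[1]}}(a,b)\to\mathbf{Hom}_{\mathbb A^{[1]}}(a,b')$ is an equivalence of categories.
   Context: Let $\mathbb A$ be an abelian category. The 2-category $\mathbb A^{[1]}$ has as objects the morphisms $a:A_1\to A_0$ of $\mathbb A$. For objects $a:A_1\to A_0$ and $b:B_1\to B_0$, a morphism $a\to b$ is a pair $(f_0,f_1)$ of morphisms $f_i:A_i\to B_i$ of $\mathbb A$ with $b f_1=f_0 a$; composition is componentwise. A 2-arrow $(f_0,f_1)\Rightarrow(g_0,g_1)$ between morphisms $a\to b$ is a morphism $\alpha:A_0\to B_1$ of $\mathbb A$ with $f_1-g_1=\alpha a$ and $f_0-g_0=b\alpha$; vertical composition is addition of such $\alpha$'s, and whiskering is given by $(h_0,h_1)\circ\alpha=h_1\alpha$ and $\alpha\circ(e_0,e_1)=\alpha e_0$. All 2-arrows are invertible, so each $\mathbf{Hom}_{\mathbb A^{[1]}}(a,b)$ is a groupoid. A morphism $(f_0,f_1):a\to b$ induces $\mathrm{Ker}(a)\to\mathrm{Ker}(b)$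 (restriction of $f_1$) and $\mathrm{Coker}(a)\to\mathrm{Coker}(b)$ (induced by $f_0$). *)

(* Defs.v *)
From HB Require Import structures.
From mathcomp Require Import all_boot all_algebra.
Set Implicit Arguments. Unset Strict Implicit. Unset Printing Implicit Defensive.
Import GRing.Theory.
Local Open Scope ring_scope.

Record preadditive := Preadditive {
  Obj : Type;
  CHom : Obj -> Obj -> zmodType;
  cmp : forall A B C : Obj, CHom B C -> CHom A B -> CHom A C;
  idm : forall A : Obj, CHom A A;
  compA : forall A B C D (h : CHom C D) (g : CHom B C) (f : CHom A B),
      cmp h (cmp g f) = cmp (cmp h g) f;
  comp1m : forall A B (f : CHom A B), cmp (idm B) f = f;
  compm1 : forall A B (f : CHom A B), cmp f (idm A) = f;
  compBl : forall A B C (g g' : CHom B C) (f : CHom A B),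
      cmp (g - g') f = cmp g f - cmp g' f;
  compBr : forall A B C (g : CHom B C) (f f' : CHom A B),
      cmp g (f - f') = cmp g f - cmp g f'
}.
Arguments cmp {p A B C}.
Arguments idm {p}.
Arguments CHom {p}.

Section Notions.
Variable C : preadditive.

Definition is_zero_obj (Z : Obj C) : Prop :=
  forall X (f : CHom Z X) (g : CHom X Z), f = 0 /\ g = 0.

Definition has_biproduct (A B : Obj C) : Prop :=
  exists (P : Obj C) (i1 : CHom A P) (i2 : CHom B P) (p1 : CHom P A) (p2 : CHom P B),
    [/\ cmp p1 i1 = idm A, cmp p2 i2 = idm B &
        cmp i1 p1 + cmp i2 p2 = idm P].

Definition is_kernel (A B K : Obj C) (f : CHom A B) (k : CHom K A) : Prop :=
  cmp f k = 0 /\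
  forall X (g : CHom X A), cmp f g = 0 -> exists! h : CHom X K, cmp k h = g.

Definition is_cokernel (A B Q : Obj C) (f : CHom A B) (q : CHom B Q) : Prop :=
  cmp q f = 0 /\
  forall X (g : CHom B X), cmp g f = 0 -> exists! h : CHom Q X, cmp h q = g.

Definition mono (A B : Obj C) (f : CHom A B) : Prop :=
  forall X (g h : CHom X A), cmp f g = cmp f h -> g = h.

Definition epi (A B : Obj C) (f : CHom A B) : Prop :=
  forall X (g h : CHom B X), cmp g f = cmp h f -> g = h.

Definition is_iso (A B : Obj C) (f : CHom A B) : Prop :=
  exists g : CHom B A, cmp g f = idm A /\ cmp f g = idm B.

Definition projective (P : Obj C) : Prop :=
  forall X Y (e : CHom X Y), epi e ->
  forall f : CHom P Y, exists g : CHom P X, cmp e g = f.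

End Notions.

Record abelian := Abelian {
  ab_pre :> preadditive;
  ab_zero : exists Z : Obj ab_pre, is_zero_obj Z;
  ab_biprod : forall A B : Obj ab_pre, has_biproduct A B;
  ab_ker : forall (A B : Obj ab_pre) (f : CHom A B),
      exists (K : Obj ab_pre) (k : CHom K A), is_kernel f k;
  ab_coker : forall (A B : Obj ab_pre) (f : CHom A B),
      exists (Q : Obj ab_pre) (q : CHom B Q), is_cokernel f q;
  ab_mono_kernel : forall (A B : Obj ab_pre) (f : CHom A B),
      mono f -> exists (D : Obj ab_pre) (g : CHom B D), is_kernel g f;
  ab_epi_cokernel : forall (A B : Obj ab_pre) (f : CHom A B),
      epi f -> exists (D : Obj ab_pre) (g : CHom D A), is_cokernel g f
}.

Section Arrows.
Variable C : preadditive.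

(* an object a : A_1 -> A_0 ; src = A_1, tgt = A_0 *)
Record arr := Arr { src : Obj C; tgt : Obj C; amap : CHom src tgt }.

(* morphisms (f_0, f_1) : a -> b with b f_1 = f_0 a *)
Definition armor (a b : arr) :=
  { f : CHom (tgt a) (tgt b) * CHom (src a) (src b) |
    cmp (amap b) f.2 = cmp f.1 (amap a) }.

Definition mor0 a b (f : armor a b) : CHom (tgt a) (tgt b) := (proj1_sig f).1.
Definition mor1 a b (f : armor a b) : CHom (src a) (src b) := (proj1_sig f).2.

Definition two_arr a b (f g : armor a b) :=
  { alpha : CHom (tgt a) (src b) |
    mor1 f - mor1 g = cmp alpha (amap a) /\
    mor0 f - mor0 g = cmp (amap b) alpha }.

Definition tval a b (f g : armor a b) (x : two_arr f g) : CHom (tgt a) (src b) :=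
  proj1_sig x.

Lemma armor_comp_proof a b c (h : armor b c) (f : armor a b) :
  cmp (amap c) (cmp (mor1 h) (mor1 f)) =
  cmp (cmp (mor0 h) (mor0 f)) (amap a).
Proof.
case: h => [[h0 h1] /= Hh]; case: f => [[f0 f1] /= Hf].
rewrite /mor0 /mor1 /=.
by rewrite compA Hh -compA Hf compA.
Qed.

Definition armor_comp a b c (h : armor b c) (f : armor a b) : armor a c :=
  exist _ (cmp (mor0 h) (mor0 f), cmp (mor1 h) (mor1 f))
        (armor_comp_proof h f).

Lemma whisk_proof a b c (h : armor b c) (f g : armor a b) (x : two_arr f g) :
  mor1 (armor_comp h f) - mor1 (armor_comp h g) = cmp (cmp (mor1 h) (tval x)) (amap a) /\
  mor0 (armor_comp h f) - mor0 (armor_comp h g) = cmp (amap c) (cmp (mor1 h) (tval x)).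
Proof.
case: x => al [H1 H0]; rewrite /tval /=.
case: h => [[h0 h1] /= Hh]; rewrite /mor0 /mor1 /= in H1 H0 *.
split.
- by rewrite -compBr H1 compA.
- by rewrite -compBr H0 !compA Hh.
Qed.

Definition whisk a b c (h : armor b c) (f g : armor a b) (x : two_arr f g)
  : two_arr (armor_comp h f) (armor_comp h g) :=
  exist _ (cmp (mor1 h) (tval x)) (whisk_proof h x).

(* Vertical composition of 2-arrows is addition, identities are 0;
   all 2-arrows are invertible, so eta and eps are automatically isos. *)
Definition postcomp_is_equivalence (a b b' : arr) (u : armor b b') : Prop :=
  exists (G : armor a b' -> armor a b)
         (Ga : forall h h' : armor a b', two_arr h h' -> two_arr (G h) (G h'))
         (eta : forall f : armor a b, two_arr f (G (armor_comp u f)))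
         (eps : forall h : armor a b', two_arr (armor_comp u (G h)) h),
    [/\
        (forall h (i : two_arr h h), tval i = 0 -> tval (Ga h h i) = 0),
        (forall h h' h'' (x : two_arr h h') (y : two_arr h' h'') (z : two_arr h h''),
            tval z = tval x + tval y ->
            tval (Ga _ _ z) = tval (Ga _ _ x) + tval (Ga _ _ y)),
        (* naturality of eta *)
        (forall f f' (x : two_arr f f'),
            tval x + tval (eta f') = tval (eta f) + tval (Ga _ _ (whisk u x))) &
        (* naturality of eps *)
        (forall h h' (y : two_arr h h'),
            tval (whisk u (Ga _ _ y)) + tval (eps h') = tval (eps h) + tval y)].

End Arrows.
Arguments Arr {C}.

(* Main.v *)
Require Import Defs.
From HB Require Import structures.
From mathcomp Require Import all_boot all_algebra.
From Stdlib Require Import ClassicalEpsilon.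
Import GRing.Theory.
Local Open Scope ring_scope.
Set Implicit Arguments. Unset Strict Implicit.

Lemma comp0r (C : preadditive) (A B D : Obj C) (g : CHom B D) :
  cmp g (0 : CHom A B) = 0.
Proof. by rewrite -(subrr (0 : CHom A B)) compBr subrr. Qed.
Lemma comp0l (C : preadditive) (A B D : Obj C) (f : CHom A B) :
  cmp (0 : CHom B D) f = 0.
Proof. by rewrite -(subrr (0 : CHom B D)) compBl subrr. Qed.
Lemma compNr (C : preadditive) (A B D : Obj C) (g : CHom B D) (f : CHom A B) :
  cmp g (- f) = - cmp g f.
Proof. by rewrite -sub0r compBr comp0r sub0r. Qed.
Lemma compNl (C : preadditive) (A B D : Obj C) (g : CHom B D) (f : CHom A B) :
  cmp (- g) f = - cmp g f.
Proof. by rewrite -sub0r compBl comp0l sub0r. Qed.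
Lemma compDr (C : preadditive) (A B D : Obj C) (g : CHom B D) (f f' : CHom A B) :
  cmp g (f + f') = cmp g f + cmp g f'.
Proof. by apply/eqP; rewrite -subr_eq -compBr addrK. Qed.
Lemma compDl (C : preadditive) (A B D : Obj C) (g g' : CHom B D) (f : CHom A B) :
  cmp (g + g') f = cmp g f + cmp g' f.
Proof. by apply/eqP; rewrite -subr_eq -compBl addrK. Qed.

Lemma kernel_mono (C : preadditive) (A B K : Obj C) (f : CHom A B) (k : CHom K A) :
  is_kernel f k -> mono k.
Proof.
move=> [H1 H2] X g h Hgh.
have Hz : cmp f (cmp k g) = 0 by rewrite Defs.compA H1 comp0l.
case: (H2 X _ Hz) => w [_ Hu].
by rewrite -(Hu g erefl) (Hu h (esym Hgh)).
Qed.

Lemma coker_epi (C : preadditive) (A B Q : Obj C) (f : CHom A B) (q : CHom B Q) :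
  is_cokernel f q -> epi q.
Proof.
move=> [H1 H2] X g h Hgh.
have Hz : cmp (cmp g q) f = 0 by rewrite -Defs.compA H1 comp0r.
case: (H2 X _ Hz) => w [_ Hu].
by rewrite -(Hu g erefl) (Hu h (esym Hgh)).
Qed.

Lemma epi_sub (C : preadditive) (A B : Obj C) (e : CHom A B) :
  (forall X (g : CHom B X), cmp g e = 0 -> g = 0) -> epi e.
Proof.
move=> H X g h Hgh; apply/eqP; rewrite -subr_eq0; apply/eqP; apply: H.
by rewrite compBl Hgh subrr.
Qed.

Lemma epi_zero (C : preadditive) (A B X : Obj C) (e : CHom A B) (g : CHom B X) :
  epi e -> cmp g e = 0 -> g = 0.
Proof. by move=> He H; apply: He; rewrite H comp0l. Qed.

Lemma mono_zero (C : preadditive) (A B X : Obj C) (m : CHom A B) (g : CHom X A) :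
  mono m -> cmp m g = 0 -> g = 0.
Proof. by move=> He H; apply: He; rewrite H comp0r. Qed.

Lemma mono_comp (C : preadditive) (A B D : Obj C) (m : CHom A B) (n : CHom B D) :
  mono m -> mono n -> mono (cmp n m).
Proof. move=> Hm Hn X g h H; apply: Hm; apply: Hn; by rewrite !Defs.compA. Qed.

Lemma epi_coker_of_ker (C : abelian) (P Q N W : Obj C) (e : CHom P Q) (j : CHom N P)
  (w : CHom P W) : epi e -> is_kernel e j -> cmp w j = 0 ->
  exists w' : CHom Q W, cmp w' e = w.
Proof.
move=> He [Hj1 Hj2] Hw.
case: (ab_epi_cokernel He) => D [g0 [Hg1 Hg2]].
case: (Hj2 _ _ Hg1) => g' [Hg' _].
have : cmp w g0 = 0 by rewrite -Hg' Defs.compA Hw comp0l.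
by case/Hg2 => w' [Hw' _]; exists w'.
Qed.

Lemma image_epi (C : abelian) (X Y Q I : Obj C) (f : CHom X Y) (q : CHom Y Q)
  (m : CHom I Y) : is_cokernel f q -> is_kernel q m ->
  exists p : CHom X I, cmp m p = f /\ epi p.
Proof.
move=> Hq Hm.
case: (Hm) => Hm1 Hm2; case: (Hq) => Hq1 Hq2.
case: (Hm2 _ _ Hq1) => p [Hp _].
exists p; split => //.
case: (ab_coker p) => R [r [Hr1 Hr2]].
case: (ab_ker r) => N [n [Hn1 Hn2]].
case: (Hn2 _ _ Hr1) => p' [Hp' _].
have mm : mono m by apply: kernel_mono Hm.
have mn : mono n by apply: kernel_mono (conj Hn1 Hn2).
case: (ab_mono_kernel (mono_comp mn mm)) => D [t [Ht1 Ht2]].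
have Htf : cmp t f = 0 by rewrite -Hp -Hp' !Defs.compA -(Defs.compA t) Ht1 comp0l.
case: (Hq2 _ _ Htf) => t' [Ht' _].
have Htm : cmp t m = 0 by rewrite -Ht' -Defs.compA Hm1 comp0r.
case: (Ht2 _ _ Htm) => s [Hs _].
have Hns : cmp n s = idm I.
  by apply: mm; rewrite Defs.compA Hs compm1.
have r0 : r = 0 by rewrite -(compm1 r) -Hns Defs.compA Hn1 comp0l.
apply: epi_sub => Z g Hg.
case: (Hr2 _ _ Hg) => w [Hw _].
by rewrite -Hw r0 comp0r.
Qed.

Lemma pullback_epi (C : abelian) (X I P : Obj C) (p : CHom X I) (d : CHom P I) :
  epi p -> exists (P' : Obj C) (e : CHom P' P) (z : CHom P' X),
    epi e /\ cmp p z = cmp d e.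
Proof.
move=> Hp.
case: (ab_biprod X P) => S [i1 [i2 [p1 [p2 [H11 H22 Hid]]]]].
have H21 : cmp p2 i1 = 0.
  have E : cmp p2 i1 = cmp p2 i1 + cmp p2 i1.
    rewrite -{1}(comp1m i1) -Hid compDl compDr.
    have -> : cmp (cmp i1 p1) i1 = i1 by rewrite -Defs.compA H11 compm1.
    by rewrite -!Defs.compA (Defs.compA p2 i2) H22 comp1m.
  by apply: (addrI (cmp p2 i1)); rewrite addr0 -E.
pose phi := cmp p p1 - cmp d p2.
have Hphi1 : cmp phi i1 = p by rewrite /phi compBl -!Defs.compA H11 H21 comp0r compm1 subr0.
have Ephi : epi phi.
  by move=> Z g h H; apply: Hp; rewrite -Hphi1 !Defs.compA H.
case: (ab_ker phi) => P' [k Hk].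
exists P', (cmp p2 k), (cmp p1 k); split; last first.
  apply/eqP; rewrite -subr_eq0 !Defs.compA -compBl; apply/eqP; exact: Hk.1.
apply: epi_sub => Z g Hg.
have : cmp (cmp g p2) k = 0 by rewrite -Defs.compA.
case/(epi_coker_of_ker Ephi Hk) => hh Hhh.
have hh0 : hh = 0.
  apply: (epi_zero Hp); rewrite -Hphi1 Defs.compA Hhh -Defs.compA H21 comp0r //.
have : cmp g p2 = 0 by rewrite -Hhh hh0 comp0l.
by move=> G0; rewrite -(compm1 g) -H22 Defs.compA G0 comp0l.
Qed.

Lemma pseudo_lift (C : abelian) (X Y Q P : Obj C) (f : CHom X Y) (q : CHom Y Q)
  (d : CHom P Y) : is_cokernel f q -> cmp q d = 0 ->
  exists (P' : Obj C) (e : CHom P' P) (z : CHom P' X), epi e /\ cmp f z = cmp d e.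
Proof.
move=> Hq Hd.
case: (ab_ker q) => I [m Hm].
case: (image_epi Hq Hm) => p [Hmp Ep].
case: (Hm.2 _ _ Hd) => d' [Hd' _].
case: (pullback_epi d' Ep) => P' [e [z [Ee Hz]]].
exists P', e, z; split => //.
by rewrite -Hmp -Defs.compA Hz Defs.compA Hd'.
Qed.

Lemma proj_lift (C : abelian) (X Y Q P : Obj C) (f : CHom X Y) (q : CHom Y Q)
  (d : CHom P Y) : is_cokernel f q -> cmp q d = 0 -> projective P ->
  exists z : CHom P X, cmp f z = d.
Proof.
move=> Hq Hd HP.
case: (pseudo_lift Hq Hd) => P' [e [z [Ee Hz]]].
case: (HP _ _ _ Ee (idm P)) => s Hs.
by exists (cmp z s); rewrite Defs.compA Hz -Defs.compA Hs compm1.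
Qed.

Definition KerH (C : abelian) (b b' : arr C) (u : armor b b') : Prop :=
  exists (K : Obj C) (k : CHom K (src b)) (K' : Obj C) (k' : CHom K' (src b'))
                 (phi : CHom K K'),
      [/\ is_kernel (amap b) k, is_kernel (amap b') k',
          cmp k' phi = cmp (mor1 u) k & is_iso phi].

Lemma inj_u1 (C : abelian) (b b' : arr C) (u : armor b b') (X : Obj C)
  (d : CHom X (src b)) : KerH u -> cmp (amap b) d = 0 -> cmp (mor1 u) d = 0 -> d = 0.
Proof.
move=> [K [k [K' [k' [phi [Hk Hk' Hkp [phii [Hi1 Hi2]]]]]]]] Hb Hu.
case: (Hk.2 _ _ Hb) => t [Ht _].
have : cmp k' (cmp phi t) = 0 by rewrite Defs.compA Hkp -Defs.compA Ht.
move/(mono_zero (kernel_mono Hk')) => H.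
have t0 : t = 0 by rewrite -(comp1m t) -Hi1 -Defs.compA H comp0r.
by rewrite -Ht t0 comp0r.
Qed.

Lemma lift_u (C : abelian) (b b' : arr C) (u : armor b b') (Q : Obj C)
  (q : CHom (tgt b) Q) (X : Obj C) (x : CHom X (tgt b)) (y : CHom X (src b')) :
  KerH u -> is_cokernel (amap b) q -> cmp q x = 0 ->
  cmp (amap b') y = cmp (mor0 u) x ->
  exists w : CHom X (src b), cmp (amap b) w = x /\ cmp (mor1 u) w = y.
Proof.
move=> HK Hq Hqx Hy.
have Hu : cmp (amap b') (mor1 u) = cmp (mor0 u) (amap b) := proj2_sig u.
case: (pseudo_lift Hq Hqx) => P' [e [z [Ee Hz]]].
have HK' := HK.
case: HK' => [K [k [K' [k' [phi [Hk Hk' Hkp [phii [Hi1 Hi2]]]]]]]].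
pose t' := cmp y e - cmp (mor1 u) z.
have Ht' : cmp (amap b') t' = 0.
  rewrite /t' compBr !Defs.compA Hy Hu -!Defs.compA Hz subrr //.
case: (Hk'.2 _ _ Ht') => s' [Hs' _].
pose w0 := z + cmp k (cmp phii s').
have Hw0b : cmp (amap b) w0 = cmp x e.
  by rewrite /w0 compDr Defs.compA Hk.1 comp0l addr0.
have Hw0u : cmp (mor1 u) w0 = cmp y e.
  rewrite /w0 compDr Defs.compA -Hkp -Defs.compA (Defs.compA phi) Hi2 comp1m Hs'.
  by rewrite /t' addrC subrK.
case: (ab_ker e) => N [j Hj].
have Hw0j : cmp w0 j = 0.
  apply: (inj_u1 HK).
    by rewrite Defs.compA Hw0b -Defs.compA Hj.1 comp0r.
  by rewrite Defs.compA Hw0u -Defs.compA Hj.1 comp0r.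
case: (epi_coker_of_ker Ee Hj Hw0j) => w Hw.
exists w; split; apply: Ee.
  by rewrite -Defs.compA Hw Hw0b.
by rewrite -Defs.compA Hw Hw0u.
Qed.

Definition CokH (C : abelian) (b b' : arr C) (u : armor b b') : Prop :=
  exists (Q : Obj C) (q : CHom (tgt b) Q) (Q' : Obj C) (q' : CHom (tgt b') Q')
                   (psi : CHom Q Q'),
      [/\ is_cokernel (amap b) q, is_cokernel (amap b') q',
          cmp psi q = cmp q' (mor0 u) & is_iso psi].

Lemma vcomp_proof (C : preadditive) (a b : arr C) (f g h : armor a b)
  (x : two_arr f g) (y : two_arr g h) :
  mor1 f - mor1 h = cmp (Defs.tval x + Defs.tval y) (amap a) /\
  mor0 f - mor0 h = cmp (amap b) (Defs.tval x + Defs.tval y).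
Proof.
case: x => x [Hx1 Hx0]; case: y => y [Hy1 Hy0]; rewrite /Defs.tval /=.
by rewrite compDl compDr -Hx1 -Hx0 -Hy1 -Hy0 !addrA subrK subrK.
Qed.
Definition vcomp (C : preadditive) (a b : arr C) (f g h : armor a b)
  (x : two_arr f g) (y : two_arr g h) : two_arr f h :=
  exist _ (Defs.tval x + Defs.tval y) (vcomp_proof x y).

Lemma vinv_proof (C : preadditive) (a b : arr C) (f g : armor a b)
  (x : two_arr f g) :
  mor1 g - mor1 f = cmp (- Defs.tval x) (amap a) /\
  mor0 g - mor0 f = cmp (amap b) (- Defs.tval x).
Proof.
case: x => x [Hx1 Hx0]; rewrite /Defs.tval /=.
by rewrite compNl compNr -Hx1 -Hx0 !opprB.
Qed.
Definition vinv (C : preadditive) (a b : arr C) (f g : armor a b)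
  (x : two_arr f g) : two_arr g f :=
  exist _ (- Defs.tval x) (vinv_proof x).

Lemma tvalb (C : preadditive) (a b : arr C) (f g : armor a b) (x : two_arr f g) :
  cmp (amap b) (Defs.tval x) = mor0 f - mor0 g.
Proof. by case: x => x [H1 H]; rewrite /Defs.tval /= H. Qed.

Lemma full_u (C : abelian) (a b b' : arr C) (u : armor b b') (f g : armor a b)
  (be : two_arr (armor_comp u f) (armor_comp u g)) :
  KerH u -> CokH u -> exists al : two_arr f g, cmp (mor1 u) (Defs.tval al) = Defs.tval be.
Proof.
move=> HK [Q [q [Q' [q' [psi [Hq Hq' Hpsi [psii [Hp1 Hp2]]]]]]]].
case: be => be [Hb1 Hb0]; rewrite /Defs.tval /=.
rewrite /mor1 /mor0 /= -/(mor1 u) -/(mor0 u) -/(mor1 f) -/(mor0 f)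
  -/(mor1 g) -/(mor0 g) in Hb1 Hb0.
have Hf : cmp (amap b) (mor1 f) = cmp (mor0 f) (amap a) := proj2_sig f.
have Hg : cmp (amap b) (mor1 g) = cmp (mor0 g) (amap a) := proj2_sig g.
pose x := mor0 f - mor0 g.
have Hqx : cmp q x = 0.
  have : cmp psi (cmp q x) = 0.
    by rewrite Defs.compA Hpsi -Defs.compA /x compBr Hb0 Defs.compA Hq'.1 comp0l.
  by move=> H; rewrite -(comp1m (cmp q x)) -Hp1 -Defs.compA H comp0r.
have Hy : cmp (amap b') be = cmp (mor0 u) x by rewrite /x compBr Hb0.
case: (lift_u HK Hq Hqx Hy) => al [Ha1 Ha2].
have Hal : mor1 f - mor1 g = cmp al (amap a).
  apply/eqP; rewrite eq_sym -subr_eq0; apply/eqP; apply: (inj_u1 HK).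
    by rewrite compBr Defs.compA Ha1 compBr Hf Hg /x compBl subrr.
  by rewrite compBr Defs.compA Ha2 -Hb1 compBr subrr.
by exists (exist _ al (conj Hal (esym Ha1))).
Qed.

Lemma esurj_u (C : abelian) (a b b' : arr C) (u : armor b b') (h : armor a b') :
  projective (tgt a) -> KerH u -> CokH u ->
  exists f : armor a b, exists be : CHom (tgt a) (src b'),
    mor1 (armor_comp u f) - mor1 h = cmp be (amap a) /\
    mor0 (armor_comp u f) - mor0 h = cmp (amap b') be.
Proof.
move=> HP HK [Q [q [Q' [q' [psi [Hq Hq' Hpsi [psii [Hp1 Hp2]]]]]]]].
have Hh : cmp (amap b') (mor1 h) = cmp (mor0 h) (amap a) := proj2_sig h.
case: (HP _ _ _ (coker_epi Hq) (cmp psii (cmp q' (mor0 h)))) => f0 Hf0.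
pose d := cmp (mor0 u) f0 - mor0 h.
have Hqd : cmp q' d = 0.
  rewrite /d compBr Defs.compA -Hpsi -Defs.compA Hf0 Defs.compA Hp2 comp1m.
  exact: subrr.
case: (proj_lift Hq' Hqd HP) => be0 Hbe0.
have Hqu : cmp q' (cmp (mor0 u) f0) = cmp q' (mor0 h).
  by apply/eqP; rewrite -subr_eq0 -compBr; apply/eqP.
have Hqx : cmp q (cmp f0 (amap a)) = 0.
  have : cmp psi (cmp q (cmp f0 (amap a))) = 0.
    rewrite !Defs.compA Hpsi -(Defs.compA q') Hqu -Defs.compA -Hh Defs.compA Hq'.1.
    exact: comp0l.
  by move=> H; rewrite -(comp1m (cmp q _)) -Hp1 -Defs.compA H comp0r.
pose y := mor1 h + cmp be0 (amap a).
have Hy : cmp (amap b') y = cmp (mor0 u) (cmp f0 (amap a)).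
  rewrite /y compDr Hh (Defs.compA (amap b')) Hbe0 /d compBl addrC subrK Defs.compA //.
case: (lift_u HK Hq Hqx Hy) => f1 [Hf1a Hf1b].
exists (exist _ (f0, f1) Hf1a), be0; split.
  by rewrite /mor1 /= -/(mor1 u) Hf1b /y addrC addKr.
by rewrite Hbe0.
Qed.

Lemma combo1 (V : zmodType) (p x y q r : V) :
  (p + (x + y)) - r = (p + x - q) + ((q + y) - r).
Proof. by rewrite -!addrA addKr. Qed.

Lemma combo2 (V : zmodType) (x e1 e2 : V) :
  x + (- e2) = (- e1) + ((e1 + x) - e2).
Proof. by rewrite -!addrA addKr. Qed.

Lemma esurj_sig (C : abelian) (a b b' : arr C) (u : armor b b') (h : armor a b') :
  projective (tgt a) -> KerH u -> CokH u ->
  exists p : {f : armor a b & two_arr (armor_comp u f) h}, True.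
Proof.
move=> HP HK HC; case: (esurj_u h HP HK HC) => f [be [H1 H0]].
by exists (existT _ f (exist _ be (conj H1 H0))).
Qed.

Lemma inj_two (C : abelian) (a b b' : arr C) (u : armor b b') (x y : CHom (tgt a) (src b)) :
  KerH u -> cmp (amap b) x = cmp (amap b) y -> cmp (mor1 u) x = cmp (mor1 u) y -> x = y.
Proof.
move=> HK H1 H2; apply/eqP; rewrite -subr_eq0; apply/eqP; apply: (inj_u1 HK).
  by rewrite compBr H1 subrr.
by rewrite compBr H2 subrr.
Qed.

Theorem corollary2p2 (C : abelian) (a b b' : arr C) (u : armor b b')
  (Hker : exists (K : Obj C) (k : CHom K (src b)) (K' : Obj C) (k' : CHom K' (src b'))
                 (phi : CHom K K'),
      [/\ is_kernel (amap b) k, is_kernel (amap b') k',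
          cmp k' phi = cmp (mor1 u) k & is_iso phi])
  (Hcoker : exists (Q : Obj C) (q : CHom (tgt b) Q) (Q' : Obj C) (q' : CHom (tgt b') Q')
                   (psi : CHom Q Q'),
      [/\ is_cokernel (amap b) q, is_cokernel (amap b') q',
          cmp psi q = cmp q' (mor0 u) & is_iso psi])
  (Hproj : projective (tgt a)) :
  postcomp_is_equivalence a u.
Proof.
have HK : KerH u := Hker.
have HC : CokH u := Hcoker.
pose S h := proj1_sig (constructive_indefinite_description _ (esurj_sig h Hproj HK HC)).
pose G h := projT1 (S h).
pose eps h : two_arr (armor_comp u (G h)) h := projT2 (S h).
have FF := fun f g be => full_u (a := a) (f := f) (g := g) be HK HC.
pose pre f g be := proj1_sig (constructive_indefinite_description _ (FF f g be)).
have Hpre : forall f g be, cmp (mor1 u) (Defs.tval (pre f g be)) = Defs.tval be.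
  by move=> f g be; exact: (proj2_sig (constructive_indefinite_description _ (FF f g be))).
pose Ga h h' (y : two_arr h h') : two_arr (G h) (G h') :=
  pre _ _ (vcomp (vcomp (eps h) y) (vinv (eps h'))).
pose eta f : two_arr f (G (armor_comp u f)) := pre _ _ (vinv (eps (armor_comp u f))).
exists G, Ga, eta, eps; split.
- move=> h i Hi; apply: (inj_two HK).
    by rewrite tvalb comp0r subrr.
  by rewrite Hpre comp0r /= Hi addr0 subrr.
- move=> h h' h'' x y z Hz; apply: (inj_two HK).
    by rewrite compDr !tvalb addrA subrK.
  by rewrite compDr !Hpre /= Hz (combo1 _ _ _ (Defs.tval (eps h'))).
- move=> f f' x; apply: (inj_two HK).
    by rewrite !compDr !tvalb !addrA !subrK.
  by rewrite !compDr !Hpre /= -combo2.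
- move=> h h' y /=.
  by rewrite Hpre /= subrK.
Qed.
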